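(* Let $\mathcal S$ be a finite set, let $0<\lambda<1$, and let $N_1,\dots,N_t$ be row-stochastic matrices indexed by $\mathcal S\times\mathcal S$ with $\|N_k\|\le\lambda$ for all $k$. Let $\boldsymbol\delta\in\mathbb R^{\mathcal S\times\mathcal S}$ satisfy $\sum_{s}\boldsymbol\delta(s)=0$ and $\|\boldsymbol\delta\|_1=2\delta$ for a scalar $\delta>0$, and let $S^*\subseteq\mathcal S\times\mathcal S$ satisfy $\sum_{s\in S^*}\boldsymbol\delta(s)=\delta$. Suppose $\hat M_k=N_k+\mathbf 1\boldsymbol\delta^T$ is row-stochastic for each $k$. Put $\hat M=\hat M_1\hat M_2\cdots\hat M_t$, $N=N_1N_2\cdots N_t$ and $E=\hat M-N$. Then all rows of $E$ are equal, and in each row the entries in the columns indexed by $S^*$ sum to at least $\lambda'\delta$, where $\lambda'=1-\frac{\lambda}{1-\lambda}$.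
   Context: For a real square matrix $M$, $\|M\|=\max_{x\neq 0,\ x\perp\mathbf 1}\|x^TM\|_1/\|x\|_1$, where $\mathbf 1$ is the all-ones vector. In the application, $N_k=M_{e_k,i}\otimes M_{e_k,j}$ is the tensor (Kronecker) product of the transition matrices of two characters $i,j$ on the $k$-th edge of a root-to-leaf path, i.e. $(M_{e,i}\otimes M_{e,j})_{(a,b),(a',b')}=M_{e,i}(a,a')M_{e,j}(b,b')$, and $\hat M_k$ is the joint transition matrix of the dependent pair. *)

(* Defs.v *)
From HB Require Import structures.
From mathcomp Require Import all_boot all_order all_algebra.
Set Implicit Arguments. Unset Strict Implicit. Unset Printing Implicit Defensive.
Import Order.TTheory GRing.Theory Num.Theory.
Local Open Scope ring_scope.

Section Defs.
Variables (R : realFieldType) (T : finType).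

Definition fmat := T -> T -> R.

Definition fmmul (A B : fmat) : fmat := fun i j => \sum_k A i k * B k j.

Definition fmid : fmat := fun i j => (i == j)%:R.

Definition fmprod (Ms : seq fmat) : fmat := foldr fmmul fmid Ms.

Definition row_stochastic (M : fmat) : Prop :=
  (forall i j, 0 <= M i j) /\ (forall i, \sum_j M i j = 1).

Definition vmul (x : T -> R) (M : fmat) : T -> R := fun j => \sum_i x i * M i j.

Definition l1 (x : T -> R) : R := \sum_i `|x i|.

Definition opnorm_le (M : fmat) (lam : R) : Prop :=
  forall x : T -> R, (exists i, x i != 0) -> \sum_i x i = 0 ->
    l1 (vmul x M) / l1 x <= lam.

Definition add_rank1 (N : fmat) (d : T -> R) : fmat := fun i j => N i j + d j.

End Defs.

(* Main.v *)
Require Import Defs.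
From HB Require Import structures.
From mathcomp Require Import all_boot all_order all_algebra.
From mathcomp Require Import ring lra.
Import Order.TTheory GRing.Theory Num.Theory.
Local Open Scope ring_scope.

Set Implicit Arguments.
Section Aux.
Variables (R : realFieldType) (T : finType) (t : nat) (Nk : 'I_t -> fmat R T)
  (d : T -> R) (lam : R).
Hypothesis rs : forall k i, \sum_j Nk k i j = 1.
Hypothesis d0 : \sum_j d j = 0.
Hypothesis opn : forall k, opnorm_le (Nk k) lam.
Hypothesis lam0 : 0 <= lam.

Local Notation P s := (fmprod [seq Nk k | k <- s]).

Lemma Pcons k s : P (k :: s) = fmmul (Nk k) (P s).
Proof. by []. Qed.

Lemma fmid_rowsum i : \sum_j @fmid R T i j = 1.
Proof.
rewrite /fmid (bigD1 i) //= eqxx big1 ?addr0 // => j.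
by rewrite eq_sym => /negbTE ->.
Qed.

Lemma P_rowsum s i : \sum_j P s i j = 1.
Proof.
elim: s i => [|k s IH] i; first exact: fmid_rowsum.
rewrite Pcons /fmmul exchange_big /=.
rewrite -(rs k i); apply: eq_bigr => m _.
by rewrite -mulr_sumr IH mulr1.
Qed.

Fixpoint ev (s : seq 'I_t) : T -> R :=
  if s is k :: s' then fun j => ev s' j + vmul d (P s') j else fun _ => 0.

Lemma Phat s i j :
  fmprod [seq add_rank1 (Nk k) d | k <- s] i j = P s i j + ev s j.
Proof.
elim: s i j => [|k s IH] i j; first by rewrite /= addr0.
have -> : fmprod [seq add_rank1 (Nk k0) d | k0 <- k :: s] i j =
  \sum_m (Nk k i m + d m) * fmprod [seq add_rank1 (Nk k0) d | k0 <- s] m j by [].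
rewrite Pcons /= /fmmul /vmul.
under eq_bigr do rewrite IH mulrDl !mulrDr.
rewrite !big_split /= -!mulr_suml rs d0 mul0r mul1r addr0.
ring.
Qed.

Lemma vmul_mmul (x : T -> R) (A B : fmat R T) j : vmul x (fmmul A B) j = vmul (vmul x A) B j.
Proof.
rewrite /vmul /fmmul.
under eq_bigr do rewrite mulr_sumr.
rewrite exchange_big; apply: eq_bigr => k _; rewrite mulr_suml.
by apply: eq_bigr => i _; rewrite mulrA.
Qed.

Lemma vmul_sumN (x : T -> R) k : \sum_j vmul x (Nk k) j = \sum_i x i.
Proof.
rewrite /vmul exchange_big; apply: eq_bigr => i _.
by rewrite -mulr_sumr rs mulr1.
Qed.

Lemma vmul_id (x : T -> R) j : vmul x (@fmid R T) j = x j.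
Proof.
rewrite /vmul /fmid (bigD1 j) //= eqxx mulr1 big1 ?addr0 // => i.
by move=> /negbTE ->; rewrite mulr0.
Qed.

Lemma l1_ge0 (x : T -> R) : 0 <= l1 x.
Proof. by apply: sumr_ge0 => i _; apply: normr_ge0. Qed.

Lemma step (x : T -> R) k : \sum_i x i = 0 -> l1 (vmul x (Nk k)) <= lam * l1 x.
Proof.
move=> sx; case: (boolP [exists i, x i != 0]) => [/existsP ex | /existsPn all0].
  have H := opn k x ex sx.
  have lp : 0 < l1 x.
    case: ex => i xi; rewrite /l1 (bigD1 i) //=.
    apply: (lt_le_trans (y := `|x i|)); first by rewrite normr_gt0.
    by rewrite lerDl; apply: sumr_ge0 => j _; apply: normr_ge0.
  by rewrite -ler_pdivrMr.
have -> : l1 (vmul x (Nk k)) = 0.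
  rewrite /l1 big1 // => j _; rewrite /vmul big1 ?normr0 // => i _.
  by have := all0 i; rewrite negbK => /eqP ->; rewrite mul0r.
by apply: mulr_ge0 => //; apply: l1_ge0.
Qed.

Lemma decay s (x : T -> R) : \sum_i x i = 0 -> l1 (vmul x (P s)) <= lam ^+ size s * l1 x.
Proof.
elim: s x => [|k s IH] x sx.
  rewrite expr0 mul1r /l1; rewrite le_eqVlt; apply/orP; left; apply/eqP/eq_bigr => j _.
  by rewrite vmul_id.
have E : l1 (vmul x (P (k :: s))) = l1 (vmul (vmul x (Nk k)) (P s)).
  by apply: eq_bigr => j _; rewrite Pcons vmul_mmul.
rewrite E; apply: (le_trans (IH _ _)); first by rewrite vmul_sumN.
rewrite /= exprSr -mulrA; apply: ler_wpM2l; first exact: exprn_ge0.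
exact: step.
Qed.

Lemma vmul_sumP (x : T -> R) s : \sum_j vmul x (P s) j = \sum_i x i.
Proof.
rewrite /vmul exchange_big; apply: eq_bigr => i _.
by rewrite -mulr_sumr P_rowsum mulr1.
Qed.

Lemma half (v : T -> R) (A : {set T}) : \sum_i v i = 0 -> - (l1 v / 2) <= \sum_(i in A) v i.
Proof.
move=> sv.
have s1 := sv; rewrite (bigID (mem A)) /= in s1.
have l1s : l1 v = \sum_(i in A) `|v i| + \sum_(i | i \notin A) `|v i|.
  by rewrite /l1 (bigID (mem A)).
have h1 : - \sum_(i in A) v i <= \sum_(i in A) `|v i|.
  rewrite -sumrN; apply: ler_sum => i _; by rewrite -normrN ler_norm.
have h2 : \sum_(i | i \notin A) v i <= \sum_(i | i \notin A) `|v i|.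
  by apply: ler_sum => i _; rewrite ler_norm.
rewrite l1s; lra.
Qed.

End Aux.

Theorem mainTheorem10 (R : realFieldType) (S : finType) (lam : R)
  (t : nat) (Nk : 'I_t -> fmat R (S * S)%type) (d : (S * S)%type -> R)
  (delta : R) (Sstar : {set (S * S)%type}) :
  0 < lam -> lam < 1 ->
  (0 < t)%N ->
  (forall k, row_stochastic (Nk k)) ->
  (forall k, opnorm_le (Nk k) lam) ->
  \sum_s d s = 0 ->
  0 < delta ->
  l1 d = 2 * delta ->
  \sum_(s in Sstar) d s = delta ->
  (forall k, row_stochastic (add_rank1 (Nk k) d)) ->
  let Mhat := fmprod [seq add_rank1 (Nk k) d | k <- enum 'I_t] in
  let N := fmprod [seq Nk k | k <- enum 'I_t] in
  let E := fun i j => Mhat i j - N i j in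
  (forall i i' j, E i j = E i' j) /\
  (forall i, (1 - lam / (1 - lam)) * delta <= \sum_(j in Sstar) E i j).
Proof.
move=> lp l1' tp rsk opn d0 dp l1d sd _ Mhat N E.
have rs : forall k i, \sum_j Nk k i j = 1 by move=> k i; case: (rsk k).
have lam0 : 0 <= lam by apply: ltW.
have EE : forall i j, E i j = ev Nk d (enum 'I_t) j.
  by move=> i j; rewrite /E /Mhat /N (Phat Nk d rs d0) addrAC subrr add0r.
split; first by move=> i i' j; rewrite !EE.
move=> i.
have nz : 1 - lam != 0 by rewrite subr_eq0 eq_sym lt_eqF.
have bound : forall k s,
  delta - delta * lam / (1 - lam) + delta * lam ^+ (size s).+1 / (1 - lam)
    <= \sum_(j in Sstar) ev Nk d (k :: s) j.
  move=> k s; elim: s k => [|k' s IH] k.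
    rewrite expr1 subrK /= -sd; rewrite le_eqVlt; apply/orP; left; apply/eqP/eq_bigr => j _.
    by rewrite add0r vmul_id.
  have -> : \sum_(j in Sstar) ev Nk d [:: k, k' & s] j =
    \sum_(j in Sstar) ev Nk d (k' :: s) j +
    \sum_(j in Sstar) vmul d (fmprod [seq Nk k0 | k0 <- k' :: s]) j.
    by rewrite -big_split.
  have h1 := IH k'.
  have h3 := half _ Sstar (etrans (vmul_sumP Nk rs d (k' :: s)) d0).
  have h4 := decay Nk rs opn lam0 (k' :: s) d d0.
  rewrite l1d /= in h4.
  set p := lam ^+ (size s).+1 in h1 h4 *.
  have key : delta * lam ^+ (size s).+2 / (1 - lam) =
             delta * p / (1 - lam) - p * delta.
    rewrite /p exprS; field; exact: nz.
  rewrite /= key.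
  set q := delta * p / (1 - lam) in h1 *.
  set r := delta * lam / (1 - lam) in h1 *.
  set u := l1 (vmul d (fmprod [seq Nk k0 | k0 <- k' :: s])) in h3 h4.
  nra.
case Ee : (enum 'I_t) => [|k s].
  by move: (size_enum_ord t); rewrite Ee /= => tt; rewrite -tt in tp.
under eq_bigr do rewrite EE.
rewrite Ee; apply: le_trans (bound k s).
have -> : (1 - lam / (1 - lam)) * delta = delta - delta * lam / (1 - lam).
  by field.
rewrite lerDl; apply: divr_ge0; last by rewrite subr_ge0 ltW.
by apply: mulr_ge0; [apply: ltW | apply: exprn_ge0].
Qed.
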